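(* Let $G$ be a finite abelian group, $\Phi$ a normalized $3$-cocycle on $G$, $V\in{}^{\mathbbm{k}G}_{\mathbbm{k}G}\mathcal{YD}^{\Phi}$, $H=G_V$ and $\Psi=\Phi|_H$. Then there is an object $U$ of ${}^{\mathbbm{k}H}_{\mathbbm{k}H}\mathcal{YD}^{\Psi}$ such that $B(V)\cong B(U)$.
   Context: $\mathbbm{k}$ is algebraically closed of characteristic zero. For a finite abelian group $K$, a normalized 3-cocycle $\Phi$ and $g\in K$, $\widetilde{\Phi}_g(x,y)=\frac{\Phi(g,x,y)\Phi(x,y,g)}{\Phi(x,g,y)}$. The braided tensor category ${}^{\mathbbm{k}K}_{\mathbbm{k}K}\mathcal{YD}^{\Phi}$ has objects the $K$-graded spaces $V=\bigoplus_gV_g$ (grading = left coaction) with operators $e\triangleright-$ preserving each $V_g$, $1\triangleright v=v$, $e\triangleright(f\triangleright v)=\widetilde{\Phi}_g(e,f)(ef)\triangleright v$ for $v\in V_g$; tensor product: degree $gh$, $e\triangleright(X\otimes Y)=\widetilde{\Phi}_e(g,h)(e\triangleright X)\otimes(e\triangleright Y)$; associator $(X\otimes Y)\otimes Z\mapsto\Phi(e,f,g)^{-1}X\otimes(Y\otimes Z)$; braiding $X\otimes Y\mapsto(e\triangleright Y)\otimes X$. A simple object $V$ is concentrated in one degree $g_V$; the support group $G_V$ of $V=\bigoplus_iV_i$ ($V_i$ simple) is the subgroup generated by the $g_{V_i}$. The Nichols algebra $B(V)=T_\Phi(V)/I$ (tensor algebra in the category modulo the unique maximal graded Hopf ideal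 generated by elements of degree $\ge2$). Two Nichols algebras $B(V)$, $B(U)$ (possibly over different base groups and cocycles) with $\dim V=\dim U=l$ are isomorphic if there is a $\mathbb{Z}^l$-graded linear isomorphism $B(V)\to B(U)$ preserving multiplication and comultiplication. *)

(* Defs.v *)
From HB Require Import structures.
From mathcomp Require Import all_boot all_order all_fingroup all_algebra.
Set Implicit Arguments. Unset Strict Implicit. Unset Printing Implicit Defensive.
Import GRing.Theory.
Local Open Scope ring_scope.

Definition normalized_3cocycle (k : fieldType) (gT : finGroupType)
    (K : {set gT}) (Phi : gT -> gT -> gT -> k) : Prop :=
  [/\ (forall e f g, e \in K -> f \in K -> g \in K -> Phi e f g != 0),
      (forall e f, e \in K -> f \in K ->
         [/\ Phi 1%g e f = 1, Phi e 1%g f = 1 & Phi e f 1%g = 1]) &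
      (forall e f g h, e \in K -> f \in K -> g \in K -> h \in K ->
         Phi (e * f)%g g h * Phi e f (g * h)%g
         = Phi e f g * Phi e (f * g)%g h * Phi f g h)].

Definition tPhi (k : fieldType) (gT : finGroupType)
    (Phi : gT -> gT -> gT -> k) (g x y : gT) : k :=
  Phi g x y * Phi x y g / Phi x g y.

(* ---------- objects of YD^Phi over K, of dimension l ----------
   An object is given by a homogeneous basis v_0..v_{l-1}: v_i has degree
   deg i, and e |> v_j = \sum_i act e i j v_i. *)
Definition yd_obj (k : fieldType) (gT : finGroupType) (K : {set gT})
    (Phi : gT -> gT -> gT -> k) (l : nat)
    (deg : 'I_l -> gT) (act : gT -> 'M[k]_l) : Prop :=
  [/\ (forall i, deg i \in K),
      (forall e, e \in K -> forall i j, deg i != deg j -> act e i j = 0),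
      act 1%g = 1%:M &
      (forall e f, e \in K -> f \in K -> forall i j,
          (act e *m act f) i j = tPhi Phi (deg j) e f * act (e * f)%g i j)].

Definition support_group (gT : finGroupType) (l : nat) (deg : 'I_l -> gT)
  : {set gT} := <<[set deg i | i in 'I_l]>>%g.

Section Tensor.
Variables (k : fieldType) (gT : finGroupType) (l : nat).
Variables (Phi : gT -> gT -> gT -> k) (deg : 'I_l -> gT) (act : gT -> 'M[k]_l).

Definition word := seq 'I_l.
(* elements of T(V): coefficient functions on the basis words
   v_{w_1} (x) ... (x) v_{w_n} (left-normed bracketing) *)
Definition tens := word -> k.
Definition tens2 := word -> word -> k.

Definition finsupp (x : tens) : Prop :=
  exists N : nat, forall w : word, (N <= size w)%N -> x w = 0.
Definition finsupp2 (z : tens2) : Prop :=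
  exists N : nat, forall p q : word, (N <= size p + size q)%N -> z p q = 0.

Definition wdeg (w : word) : gT := (\prod_(i <- w) deg i)%g.

(* multiplication of basis words: a . b = cm a b (a ++ b), obtained by
   re-bracketing a (x) b with the associator *)
Fixpoint cm_aux (x g : gT) (b : word) : k :=
  match b with
  | [::] => 1
  | i :: b' => Phi x g (deg i) * cm_aux x (g * deg i)%g b'
  end.
Definition cm (a b : word) : k := cm_aux (wdeg a) 1%g b.

Definition tmul (x y : tens) : tens := fun w =>
  \sum_(i < (size w).+1) cm (take i w) (drop i w) * x (take i w) * y (drop i w).

Definition tadd (x y : tens) : tens := fun w => x w + y w.
Definition tsub (x y : tens) : tens := fun w => x w - y w.
Definition tscale (c : k) (x : tens) : tens := fun w => c * x w.
Definition tzero : tens := fun _ => 0.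
Definition hcomp (n : nat) (x : tens) : tens :=
  fun w => if size w == n then x w else 0.

(* action of e on tensor powers: coefficient of word u in e |> w,
   using e |> (X (x) Y) = tPhi_e(g,h) (e|>X) (x) (e|>Y) *)
Fixpoint actw_aux (e g : gT) (u w : word) : k :=
  match u, w with
  | [::], [::] => 1
  | i :: u', j :: w' =>
      tPhi Phi e g (deg j) * act e i j * actw_aux e (g * deg j)%g u' w'
  | _, _ => 0
  end.
Definition actw (e : gT) (u w : word) : k := actw_aux e 1%g u w.

(* product in the algebra T (x) T of basis elements (a (x) b).(a' (x) b'):
   (m (x) m) o a^{-1} o (id (x) a) o (id (x) (c (x) id)) o (id (x) a^{-1}) o a,
   which on homogeneous elements equals
   sigma * (a . (deg b |> a')) (x) (b . b'). *)
Definition sigma (x y x' y' : gT) : k :=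
  Phi y x' y' * Phi x x' (y * y')%g / (Phi x y (x' * y')%g * Phi x' y y').

Definition prod2 (a b a' b' p q : word) : k :=
  if [&& size p == (size a + size a')%N, take (size a) p == a & q == b ++ b']
  then let u := drop (size a) p in
       sigma (wdeg a) (wdeg b) (wdeg a') (wdeg b')
       * cm a u * cm b b' * actw (wdeg b) u a'
  else 0.

(* Delta on basis words: the algebra map with Delta(v) = v (x) 1 + 1 (x) v.
   Since a basis word w ++ [:: j] equals the product w . v_j, we recurse on
   the reversed word. *)
Fixpoint Drev (r : word) : tens2 :=
  match r with
  | [::] => fun p q => ((p == [::]) && (q == [::]))%:R
  | j :: r' => fun p q =>
      \sum_(i < (size r').+1) \sum_(a : i.-tuple 'I_l)
        \sum_(b : (size r' - i).-tuple 'I_l)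
          Drev r' a b * (prod2 a b [:: j] [::] p q + prod2 a b [::] [:: j] p q)
  end.
Definition Dw (w : word) : tens2 := Drev (rev w).

Definition tDelta (x : tens) : tens2 := fun p q =>
  \sum_(w : (size p + size q).-tuple 'I_l) x w * Dw w p q.

Definition in_JT (J : tens -> Prop) (z : tens2) : Prop :=
  exists (n : nat) (x y : 'I_n -> tens),
    (forall i, [/\ finsupp (x i), finsupp (y i) & (J (x i) \/ J (y i))]) /\
    (forall p q, z p q = \sum_(i < n) x i p * y i q).

Definition graded_hopf_ideal_ge2 (J : tens -> Prop) : Prop :=
  [/\ (forall x, J x -> finsupp x),
      (J tzero /\ (forall x y, J x -> J y -> J (tadd x y)) /\
        (forall c x, J x -> J (tscale c x))),
      (forall x y, J x -> finsupp y -> J (tmul x y) /\ J (tmul y x)),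
      (forall x n, J x -> J (hcomp n x)) /\
      (forall x w, J x -> (size w < 2)%N -> x w = 0) &
      (forall x, J x -> in_JT J (tDelta x))].

(* the maximal such ideal I (the union = sum of all of them);
   B(V) = T_Phi(V) / nichols_ideal *)
Definition nichols_ideal (x : tens) : Prop :=
  exists J, graded_hopf_ideal_ge2 J /\ J x.

End Tensor.

(* Z^l-degree of a word = its multiset of letters; two words have the same
   Z^l-degree iff perm_eq. *)

(* B(V) ~= B(U) (V over (K1,Phi1), U over (K2,Phi2), both of dimension l):
   a Z^l-graded linear isomorphism B(V) -> B(U) preserving multiplication and
   comultiplication, presented through a Z^l-graded lift F : T(V) -> T(U),
   F w u = coefficient of the word u in F(w). *)
Definition nichols_iso (k : fieldType) (gT1 gT2 : finGroupType) (l : nat)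
    (Phi1 : gT1 -> gT1 -> gT1 -> k) (deg1 : 'I_l -> gT1) (act1 : gT1 -> 'M[k]_l)
    (Phi2 : gT2 -> gT2 -> gT2 -> k) (deg2 : 'I_l -> gT2) (act2 : gT2 -> 'M[k]_l)
  : Prop :=
  let IV := nichols_ideal Phi1 deg1 act1 in
  let IU := nichols_ideal Phi2 deg2 act2 in
  exists F : word l -> word l -> k,
    let appF (x : tens k l) : tens k l := fun u =>
      \sum_(w : (size u).-tuple 'I_l) F w u * x w in
    let appFF (z : tens2 k l) : tens2 k l := fun p q =>
      \sum_(a : (size p).-tuple 'I_l) \sum_(b : (size q).-tuple 'I_l)
         F a p * F b q * z a b in
    [/\ (forall w u, F w u != 0 -> perm_eq w u),
        (forall x, IV x -> IU (appF x)) /\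
        (forall x, finsupp x -> IU (appF x) -> IV x),
        (forall y, finsupp y -> exists x, finsupp x /\ IU (tsub y (appF x))),
        (forall x y, finsupp x -> finsupp y ->
           IU (tsub (tmul Phi2 deg2 (appF x) (appF y))
                    (appF (tmul Phi1 deg1 x y)))) &
        (forall x, finsupp x ->
           in_JT IU (fun p q => tDelta Phi2 deg2 act2 (appF x) p q
                                - appFF (tDelta Phi1 deg1 act1 x) p q))].

(* Main.v *)
Require Import Defs.
From Stdlib Require Import FunctionalExtensionality.
From HB Require Import structures.
From mathcomp Require Import all_boot all_order all_fingroup all_algebra.
Import GRing.Theory.
Local Open Scope ring_scope.

Lemma sum_delta (k : fieldType) (l : nat) (u : seq 'I_l) (f : seq 'I_l -> k) :
  \sum_(w : (size u).-tuple 'I_l) (((w : seq _) == u)%:R * f w) = f u.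
Proof.
rewrite (bigD1 (in_tuple u)) //= eqxx mul1r big1 ?addr0 // => w hw.
rewrite (_ : (val w == u) = false) ?mul0r //.
apply/negbTE; apply: contra hw => /eqP e; apply/eqP/val_inj => /=; exact e.
Qed.
Arguments sum_delta {k l}.

Definition J0 (k : fieldType) (l : nat) (x : tens k l) : Prop := forall w, x w = 0.
Arguments J0 {k l}.

Lemma J0_ideal (k : fieldType) (gT : finGroupType) (l : nat)
  (Phi : gT -> gT -> gT -> k) (deg : 'I_l -> gT) (act : gT -> 'M[k]_l) :
  graded_hopf_ideal_ge2 Phi deg act (@J0 k l).
Proof.
split.
- by move=> x hx; exists 0%N => w _; apply: hx.
- split; first by [].
  split; first by move=> x y hx hy w; rewrite /tadd hx hy addr0.
  by move=> c x hx w; rewrite /tscale hx mulr0.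
- move=> x y hx _; split => w; rewrite /tmul big1 // => i _.
  + by rewrite hx mulr0 mul0r.
  + by rewrite hx mulr0.
- split; first by move=> x n hx w; rewrite /hcomp hx; case: ifP.
  by move=> x w hx _; apply: hx.
- move=> x hx; exists 0%N, (fun _ => @tzero k l), (fun _ => @tzero k l); split.
  + by case.
  + move=> p q; rewrite big_ord0 /tDelta big1 // => w _; by rewrite hx mul0r.
Qed.

Theorem corollary3p5 (k : closedFieldType) (hk : [pchar k] =i pred0)
    (gT : finGroupType) (G : {group gT}) (hG : abelian G)
    (Phi : gT -> gT -> gT -> k) (hPhi : normalized_3cocycle G Phi)
    (l : nat) (deg : 'I_l -> gT) (act : gT -> 'M[k]_l)
    (hV : yd_obj G Phi deg act) :
  exists (degU : 'I_l -> gT) (actU : gT -> 'M[k]_l),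
    yd_obj (support_group deg) Phi degU actU /\
    nichols_iso Phi deg act Phi degU actU.
Proof.
exists deg, act; case: hV => hdeg hact h1 hmul.
have sub : forall e, e \in support_group deg -> e \in G.
  apply/subsetP; rewrite /support_group gen_subG; apply/subsetP => x.
  by case/imsetP => i _ ->.
split.
  split => //.
  - by move=> i; rewrite /support_group; apply: mem_gen; apply: imset_f.
  - by move=> e he; apply: hact; apply: sub.
  - by move=> e f he hf; apply: hmul; apply: sub.
exists (fun w u => ((w == u) : bool)%:R) => /=.
have appF : forall (x : tens k l) u,
  \sum_(w : (size u).-tuple 'I_l) (((w : seq _) == u)%:R * x w) = x u.
  by move=> x u; apply: sum_delta.
have appFF : forall (z : tens2 k l) p q,
  \sum_(a : (size p).-tuple 'I_l) \sum_(b : (size q).-tuple 'I_l)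
    ((((a : seq _) == p)%:R * ((b : seq _) == q)%:R) * z a b) = z p q.
  move=> z p q.
  rewrite -[RHS](sum_delta p (fun a => z a q)); apply: eq_bigr => a _.
  rewrite -(sum_delta q (fun b => ((tval a == p)%:R * z a b))).
  by apply: eq_bigr => b _; rewrite mulrCA mulrA.
have IZ : forall x : tens k l, J0 x -> nichols_ideal Phi deg act x.
  by move=> x hx; exists (@J0 k l); split => //; apply: J0_ideal.
split.
- move=> w u; have [->|ne] := eqVneq w u; first by move=> _; apply: perm_refl.
  by rewrite eqxx.
- split.
  + move=> x hx; case: hx => J [hJ Jx].
    have -> : (fun u => \sum_(w : (size u).-tuple 'I_l)
                  (((w : seq _) == u)%:R * x w)) = x.
      by apply: functional_extensionality => u; apply: appF.
    by exists J.
  + move=> x _; case => J [hJ Jx].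
    have <- : (fun u => \sum_(w : (size u).-tuple 'I_l)
                  (((w : seq _) == u)%:R * x w)) = x.
      by apply: functional_extensionality => u; apply: appF.
    by exists J.
- move=> y hy; exists y; split => //; apply: IZ => w.
  by rewrite /tsub appF subrr.
- move=> x y _ _; apply: IZ => w; rewrite /tsub appF.
  apply/eqP; rewrite subr_eq0; apply/eqP; rewrite /tmul; apply: eq_bigr => i _.
  by rewrite !appF.
- move=> x _; exists 0%N, (fun _ => @tzero k l), (fun _ => @tzero k l); split.
  + by case.
  + move=> p q; rewrite big_ord0 appFF /tDelta; apply/eqP; rewrite subr_eq0; apply/eqP.
    by apply: eq_bigr => w _; rewrite appF.
Qed.
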